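(* Let $G=\mathrm{Cay}(\Gamma,S)$ be a Cayley graph, let $h\in S$ be an involution such that $H:=\langle h\rangle$ is normal in $\Gamma$, and let $r\ge2$. If $\{\mathbb{I},h\}$ is an $(r+2)$-local $2$-separator of $G$, then the vertex $\{\mathbb{I},h\}$ is an $r$-local cutvertex of $G/h$.
   Context: Generating sets exclude the identity $\mathbb{I}$ and are closed under inverses; $\mathrm{Cay}(\Gamma,S)$ is the simple graph on $\Gamma$ with edges $\{g,gs\}$. $G/h$ is the simple graph obtained from $G$ by contracting all edges labelled $h$ (i.e. the edges $\{g,gh\}$) and identifying parallel edges: its vertices are the cosets $gH=\{g,gh\}$, and two distinct cosets are adjacent iff some element of one is adjacent in $G$ to some element of the other. Ball $B_r(v)$: subgraph of all vertices and edges on closed walks of length $\le r$ through $v$; $v$ is an $r$-local cutvertex if $B_r(v)-v$ is disconnected. For $X=\{v_0,v_1\}$, $N(X)$ is the set of vertices outside $X$ adjacent to $X$; the connectivity graph $C_r(v_0,v_1)$ has vertex set $N(X)$, $a,b$ adjacent if for some $i$ they lie in the same component of $B_r(v_i)-v_0-v_1$; $X$ is an $r$-local $2$-separator if $C_r(v_0,v_1)$ is disconnected and $d_G(v_0,v_1)\le r/2$. *)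

(* Defs.v *)
From Stdlib Require Import Relations.
From Stdlib Require List.
From HB Require Import structures.
From mathcomp Require Import ssreflect ssrfun ssrbool eqtype ssrnat seq choice monoid.

Set Implicit Arguments.
Unset Strict Implicit.
Unset Printing Implicit Defensive.

Local Open Scope group_scope.

Section Graphs.
Variable V : Type.

(* [is_walk E x p] : x :: p is a walk for the relation E
   (consecutive vertices are E-related); its length is [size p] and
   it ends at [last x p]. *)
Fixpoint is_walk (E : V -> V -> Prop) (x : V) (p : seq V) : Prop :=
  match p with
  | [::] => True
  | y :: q => E x y /\ is_walk E y q
  end.

Fixpoint walk_edge (x : V) (p : seq V) (a b : V) : Prop :=
  match p with
  | [::] => False
  | y :: q => (x = a /\ y = b) \/ (x = b /\ y = a) \/ walk_edge y q a b
  end.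

Variable adj : V -> V -> Prop.

Definition closed_walk_at (r : nat) (v : V) (p : seq V) : Prop :=
  is_walk adj v p /\ last v p = v /\ size p <= r.

Definition ball_vertex (r : nat) (v u : V) : Prop :=
  exists p, closed_walk_at r v p /\ List.In u (v :: p).

Definition ball_edge (r : nat) (v a b : V) : Prop :=
  exists p, closed_walk_at r v p /\ walk_edge v p a b.

Definition conn_in (P : V -> Prop) (E : V -> V -> Prop) (a b : V) : Prop :=
  exists p, is_walk E a p /\ last a p = b /\ List.Forall P (a :: p).

Definition ball_minus (r : nat) (v : V) (Z : V -> Prop) (u : V) : Prop :=
  ball_vertex r v u /\ ~ Z u.

Definition same_comp_ball_minus (r : nat) (v : V) (Z : V -> Prop) (a b : V)
  : Prop :=
  ball_minus r v Z a /\ ball_minus r v Z b /\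
  conn_in (ball_minus r v Z) (ball_edge r v) a b.

Definition local_cutvertex (r : nat) (v : V) : Prop :=
  exists a b, ball_minus r v (fun u => u = v) a /\
              ball_minus r v (fun u => u = v) b /\
              ~ conn_in (ball_minus r v (fun u => u = v)) (ball_edge r v) a b.

Definition nbhd2 (v0 v1 u : V) : Prop :=
  u <> v0 /\ u <> v1 /\ (adj v0 u \/ adj v1 u).

Definition conn_graph_adj (r : nat) (v0 v1 a b : V) : Prop :=
  let X := fun u => u = v0 \/ u = v1 in
  nbhd2 v0 v1 a /\ nbhd2 v0 v1 b /\
  (same_comp_ball_minus r v0 X a b \/ same_comp_ball_minus r v1 X a b).

Definition dist_le_half (r : nat) (v0 v1 : V) : Prop :=
  exists p, is_walk adj v0 p /\ last v0 p = v1 /\ 2 * size p <= r.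

Definition local_2separator (r : nat) (v0 v1 : V) : Prop :=
  v0 <> v1 /\
  (exists a b, nbhd2 v0 v1 a /\ nbhd2 v0 v1 b /\
               ~ clos_refl_trans V (conn_graph_adj r v0 v1) a b) /\
  dist_le_half r v0 v1.

End Graphs.

Section Cayley.
Variable G : groupType.

(* S generates G (as a monoid; S is assumed closed under inverses) *)
Definition generates (S : G -> Prop) : Prop :=
  forall g : G, exists l : seq G, List.Forall S l /\ g = foldr mul 1 l.

Definition generating_set (S : G -> Prop) : Prop :=
  ~ S 1 /\ (forall s, S s -> S s^-1) /\ generates S.

Definition cay_adj (S : G -> Prop) (g g' : G) : Prop :=
  exists s, S s /\ g' = g * s.

Definition hcoset (h g : G) : G -> Prop := fun x => x = g \/ x = g * h.

Definition qvert (h : G) : Type := {A : G -> Prop | exists g, A = hcoset h g}.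

Definition qadj (S : G -> Prop) (h : G) (A B : qvert h) : Prop :=
  A <> B /\ exists a b, sval A a /\ sval B b /\ cay_adj S a b.

Definition qbase (h : G) : qvert h := exist _ (hcoset h 1) (ex_intro _ 1 erefl).

End Cayley.

(* Main.v *)
Require Import Defs.
From mathcomp Require Import ssreflect ssrfun ssrbool eqtype ssrnat seq choice monoid.
From Stdlib Require Import Relations ProofIrrelevance FunctionalExtensionality PropExtensionality.
From Stdlib Require List.

Set Implicit Arguments.
Unset Strict Implicit.
Local Open Scope group_scope.

Lemma walk_edge_sym (V : Type) (x : V) p a b : walk_edge x p a b -> walk_edge x p b a.
Proof.
elim: p x => [|y p IH] x //= [[-> ->]|[[-> ->]|H]]; auto.
Qed.

Lemma walk_edge_In (V : Type) (x : V) p a b :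
  walk_edge x p a b -> List.In a (x :: p) /\ List.In b (x :: p).
Proof.
elim: p x => [|y p IH] x //= [[-> ->]|[[-> ->]|H]].
- by split; [left|right; left].
- by split; [right; left|left].
- by have [H1 H2] := IH _ H; split; right.
Qed.

Lemma In_last (V : Type) (x : V) p : List.In (last x p) (x :: p).
Proof. elim: p x => [|y p IH] x /=; [by left| by right; apply: IH]. Qed.

Lemma is_walk_cat (V : Type) E (x : V) s1 s2 :
  is_walk E x (s1 ++ s2) <-> is_walk E x s1 /\ is_walk E (last x s1) s2.
Proof.
elim: s1 x => [|y s IH] x /=; first by tauto.
rewrite IH; tauto.
Qed.

Lemma walk_edge_catl (V : Type) (x : V) s1 s2 a b :
  walk_edge x s1 a b -> walk_edge x (s1 ++ s2) a b.
Proof. elim: s1 x => [|y s IH] x //= [H|[H|H]]; auto. Qed.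

Lemma walk_map (G : groupType) S (c x : G) q :
  is_walk (cay_adj S) x q -> is_walk (cay_adj S) (c * x) (map (mul c) q).
Proof.
elim: q x => [|y q IH] x //= [[s [Hs ->]] Hw]; split; last exact: IH.
by exists s; split => //; rewrite mulgA.
Qed.

Lemma walk_edge_map (G : groupType) (c x : G) q u v :
  walk_edge x q u v -> walk_edge (c * x) (map (mul c) q) (c * u) (c * v).
Proof.
elim: q x => [|y q IH] x //= [[-> ->]|[[-> ->]|H]]; auto.
Qed.

Lemma ball_edge_vertex (V : Type) adj r (v a b : V) :
  ball_edge adj r v a b -> ball_vertex adj r v a /\ ball_vertex adj r v b.
Proof.
move=> [p [Hc He]]; have [H1 H2] := walk_edge_In He.
by split; exists p.
Qed.

Lemma conn_in_ends (V : Type) P E (a b : V) : conn_in P E a b -> P a /\ P b.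
Proof.
move=> [p [_ [Hl Hf]]]; split.
- by inversion Hf.
- rewrite -Hl; exact: (proj1 (List.Forall_forall _ _) Hf _ (In_last a p)).
Qed.

Lemma cay_sym (G : groupType) S (a b : G) :
  generating_set S -> cay_adj S a b -> cay_adj S b a.
Proof.
move=> [_ [Hi _]] [s [Hs ->]]; exists s^-1; split; first exact: Hi.
by rewrite mulgK.
Qed.

Lemma close_walk (G : groupType) S (h : G) k w a b :
  S h -> h * h = 1 -> is_walk (cay_adj S) 1 w -> (last 1 w = 1 \/ last 1 w = h) ->
  (size w <= k)%N -> walk_edge 1 w a b -> ball_edge (cay_adj S) k.+1 1 a b.
Proof.
move=> Sh hh Hw [Hl|Hl] Hs He.
- by exists w; split => //; split => //; split => //; apply: leqW.
- exists (w ++ [:: 1]); split; last exact: walk_edge_catl.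
  split; first (apply/is_walk_cat; split => //; rewrite Hl /=; split => //; by exists h).
  by rewrite last_cat Hl /= size_cat /= addn1.
Qed.

Lemma sig_ext (G : Type) (T : (G -> Prop) -> Prop) (P Q : G -> Prop) (pf : T P) (qf : T Q) :
  P = Q -> exist T P pf = exist T Q qf.
Proof. move=> E; subst; f_equal; apply: proof_irrelevance. Qed.

Lemma coset_two (G : groupType) (h : G) (X : qvert h) x y :
  h * h = 1 -> sval X x -> sval X y -> y = x \/ y = x * h.
Proof.
move=> hh; case: X => P [c E] /=; rewrite E => -[->|->] [->|->]; auto.
by right; rewrite -mulgA hh mulg1.
Qed.

Lemma coset_h (G : groupType) (h : G) (X : qvert h) x :
  h * h = 1 -> sval X x -> sval X (x * h).
Proof.
move=> hh; case: X => P [c E] /=; rewrite E => -[->|->]; first by right.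
by left; rewrite -mulgA hh mulg1.
Qed.

Lemma coset_base (G : groupType) (h : G) (X : qvert h) x :
  h * h = 1 -> sval X x -> (x = 1 \/ x = h) -> X = qbase h.
Proof.
move=> hh; case: X => P [c E] /= Hx Hx1.
have Hc : c = 1 \/ c = h.
  move: Hx; rewrite E => -[Hx|Hx]; subst.
  - by case: Hx1; auto.
  - case: Hx1 => Hx1.
    + by right; rewrite -(mulg1 c) -hh mulgA Hx1 mul1g.
    + by left; rewrite -(mulg1 c) -hh mulgA Hx1.
apply: sig_ext; rewrite E; apply: functional_extensionality => z.
apply: propositional_extensionality; rewrite /hcoset mul1g.
case: Hc => ->; rewrite ?mul1g ?hh; tauto.
Qed.

Lemma lift (G : groupType) S (h : G) :
  generating_set S -> h * h = 1 -> (forall g, g * h = h * g) ->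
  forall p (X0 : qvert h) x0, is_walk (@qadj G S h) X0 p -> sval X0 x0 ->
  exists q, is_walk (cay_adj S) x0 q /\ size q = size p /\
    sval (last X0 p) (last x0 q) /\
    (forall A B, walk_edge X0 p A B ->
       exists u v, sval A u /\ sval B v /\ walk_edge x0 q u v).
Proof.
move=> gS hh hc; elim=> [|X1 p IH] X0 x0 /=.
  by move=> _ Hx; exists [::]; do 3 split => //.
move=> [[_ [a [b [Ha [Hb Hab]]]]] Hw] Hx0.
have [y1 [Hy1 Hxy]] : exists y1, sval X1 y1 /\ cay_adj S x0 y1.
  case: (coset_two hh Ha Hx0) => ->; first by exists b.
  exists (b * h); split; first exact: coset_h.
  case: Hab => s [Hs ->]; exists s; split => //.
  by rewrite -!mulgA (hc s).
have [q [Hq [Hsz [Hl He]]]] := IH _ _ Hw Hy1.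
exists (y1 :: q); split => //; split; first by rewrite /= Hsz.
split => // A B [[<- <-]|[[<- <-]|H]].
- by exists x0, y1; do 2 split => //=; left.
- by exists y1, x0; do 2 split => //=; right; left.
- have [u [v [Hu [Hv Huv]]]] := He _ _ H.
  by exists u, v; do 2 split => //=; right; right.
Qed.

Lemma qedge_lift (G : groupType) S (h : G) r (A B : qvert h) x :
  generating_set S -> S h -> h * h = 1 -> (forall g, g * h = h * g) ->
  ball_edge (@qadj G S h) r (qbase h) A B -> sval A x ->
  exists y, sval B y /\ ball_edge (cay_adj S) (r + 2) 1 x y.
Proof.
move=> gS Sh hh hc [p [[Hw [Hl Hs]] He]] Hx.
have H1 : sval (qbase h) 1 by left.
have [q [Hq [Hsz [Hlq Hed]]]] := lift gS hh hc Hw H1.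
rewrite Hl /= /hcoset mul1g in Hlq.
have [u [v [Hu [Hv Huv]]]] := Hed _ _ He.
rewrite addn2.
case: (coset_two hh Hu Hx) => ->.
  exists v; split => //; apply: (close_walk Sh hh Hq Hlq) => //.
  by rewrite Hsz; apply: leqW.
exists (v * h); split; first exact: coset_h.
have Hm := walk_map h Hq; rewrite mulg1 in Hm.
have Hme := walk_edge_map h Huv; rewrite mulg1 in Hme.
rewrite hc (hc v).
apply: (close_walk (w := h :: map (mul h) q) Sh hh).
- by split => //; exists h; rewrite mul1g.
- rewrite /=; have := last_map (mul h) q 1; rewrite mulg1 => ->.
  by case: Hlq => ->; [right; rewrite mulg1 | left].
- by rewrite /= size_map Hsz.
- by right; right.
Qed.

Lemma qpath (G : groupType) S (h : G) r :
  generating_set S -> S h -> h * h = 1 -> (forall g, g * h = h * g) ->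
  forall p (A B : qvert h) x,
  is_walk (ball_edge (@qadj G S h) r (qbase h)) A p -> last A p = B ->
  List.Forall (ball_minus (@qadj G S h) r (qbase h) (fun u => u = qbase h)) (A :: p) ->
  sval A x -> ball_minus (cay_adj S) (r + 2) 1 (fun u => u = 1 \/ u = h) x ->
  exists y, sval B y /\
    conn_in (ball_minus (cay_adj S) (r + 2) 1 (fun u => u = 1 \/ u = h))
            (ball_edge (cay_adj S) (r + 2) 1) x y.
Proof.
move=> gS Sh hh hc; elim=> [|A' p IH] A B x /=.
  move=> _ <- _ Hx HY; exists x; split => //.
  by exists [::]; split => //; split => //; constructor.
move=> [HE Hw] Hl Hf Hx HY.
inversion Hf as [|? ? HA Hf']; subst.
inversion Hf' as [|? ? HA' Hf'']; subst.
have [y' [Hy' Exy]] := qedge_lift gS Sh hh hc HE Hx.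
have HY' : ball_minus (cay_adj S) (r + 2) 1 (fun u => u = 1 \/ u = h) y'.
  split; first exact: (proj2 (ball_edge_vertex Exy)).
  move=> Hc; apply: (proj2 HA'); exact: coset_base Hy' Hc.
have [y [Hy [p0 [Hw0 [Hl0 Hf0]]]]] := IH _ _ _ Hw erefl Hf' Hy' HY'.
exists y; split => //; exists (y' :: p0); split => //; split => //.
by constructor.
Qed.

Lemma central (G : groupType) S (h : G) :
  generating_set S -> S h -> (forall g : G, g * h * g^-1 = 1 \/ g * h * g^-1 = h) ->
  forall g, g * h = h * g.
Proof.
move=> [S1 _] Sh Hn g; case: (Hn g) => E.
- exfalso; apply: S1.
  have E2 : g * h = g by rewrite -(mulgVK g (g * h)) E mul1g.
  by rewrite -(mulKg g h) E2 mulVg in Sh.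
- by rewrite -(mulgVK g (g * h)) E.
Qed.

Lemma nb_h (G : groupType) S (h : G) a :
  h * h = 1 -> (forall g, g * h = h * g) ->
  nbhd2 (cay_adj S) 1 h a -> nbhd2 (cay_adj S) 1 h (a * h).
Proof.
move=> hh hc [a1 [ah Hadj]]; split; [|split].
- move=> E; apply: ah; by rewrite -(mulg1 a) -hh mulgA E mul1g.
- move=> E; apply: a1; by rewrite -(mulg1 a) -hh mulgA E.
- case: Hadj => -[s [Hs ->]].
  + by right; exists s; split => //; rewrite mul1g hc.
  + by left; exists s; split => //; rewrite mul1g -mulgA hc mulgA hh mul1g.
Qed.

Lemma edge_ah (G : groupType) S (h : G) r a :
  generating_set S -> S h -> h * h = 1 -> (forall g, g * h = h * g) -> (2 <= r)%N ->
  cay_adj S 1 a -> ball_edge (cay_adj S) (r + 2) 1 a (a * h).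
Proof.
move=> [_ [Hi _]] Sh hh hc r2 [s [Hs Ea]]; rewrite mul1g in Ea; subst a.
exists [:: s; s * h; h; 1]; split; last by right; right; left.
split; last split => //.
- split; first by exists s; rewrite mul1g.
  split; first by exists h.
  split; first by exists s^-1; split; [exact: Hi | rewrite hc mulgK].
  by split => //; exists h.
- by rewrite /= addn2.
Qed.

Lemma ah_edge (G : groupType) S (h : G) r a :
  generating_set S -> S h -> h * h = 1 -> (forall g, g * h = h * g) -> (2 <= r)%N ->
  nbhd2 (cay_adj S) 1 h a -> ball_edge (cay_adj S) (r + 2) 1 a (a * h).
Proof.
move=> gS Sh hh hc r2 Na.
case: Na => _ [_ [H|[s [Hs Ea]]]]; first exact: edge_ah.
have H1 : cay_adj S 1 (a * h).
  by exists s; split => //; rewrite Ea mul1g -mulgA hc mulgA hh mul1g.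
have := edge_ah gS Sh hh hc r2 H1; rewrite -mulgA hh mulg1.
by move=> [p [Hc Hw]]; exists p; split => //; apply: walk_edge_sym.
Qed.

Lemma cg_h (G : groupType) S (h : G) r a :
  generating_set S -> S h -> h * h = 1 -> (forall g, g * h = h * g) -> (2 <= r)%N ->
  nbhd2 (cay_adj S) 1 h a -> conn_graph_adj (cay_adj S) (r + 2) 1 h a (a * h).
Proof.
move=> gS Sh hh hc r2 Na.
have Nah := nb_h hh hc Na.
have E : ball_edge (cay_adj S) (r + 2) 1 a (a * h) by exact: ah_edge.
have [Va Vah] := ball_edge_vertex E.
split => //; split => //; left.
have Ya : ball_minus (cay_adj S) (r + 2) 1 (fun u => u = 1 \/ u = h) a.
  by split => //; case: Na => n1 [nh _] [|]. 
have Yah : ball_minus (cay_adj S) (r + 2) 1 (fun u => u = 1 \/ u = h) (a * h).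
  by split => //; case: Nah => n1 [nh _] [|].
split => //; split => //.
exists [:: a * h]; split => //; split => //.
by constructor => //; constructor.
Qed.

Theorem lemma6p5 (G : groupType) (S : G -> Prop) (h : G) (r : nat) :
  generating_set S ->
  S h -> h * h = 1 ->
  (forall g : G, g * h * g^-1 = 1 \/ g * h * g^-1 = h) ->
  (2 <= r)%N ->
  local_2separator (cay_adj S) (r + 2)%N 1 h ->
  local_cutvertex (@qadj G S h) r (qbase h).
Proof.
move=> gS Sh hh Hn r2 [_ [[a [b [Na [Nb Hnc]]]] _]].
have hc := central gS Sh Hn.
pose cA := exist (fun A => exists g, A = hcoset h g) (hcoset h a) (ex_intro _ a erefl).
pose cB := exist (fun A => exists g, A = hcoset h g) (hcoset h b) (ex_intro _ b erefl).
have Hin : forall c (Nc : nbhd2 (cay_adj S) 1 h c),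
  ball_minus (@qadj G S h) r (qbase h) (fun u => u = qbase h)
    (exist (fun A => exists g, A = hcoset h g) (hcoset h c) (ex_intro _ c erefl)).
  move=> c [c1 [ch Hc]].
  set C := exist _ _ _.
  have CB : C <> qbase h.
    move=> E; have : sval C c by left.
    rewrite E /= /hcoset mul1g; by case.
  have [x [Hx Hxc]] : exists x, sval (qbase h) x /\ cay_adj S x c.
    case: Hc => H; [exists 1 | exists h]; split => //; [by left | by right; rewrite mul1g].
  have Cc : sval C c by left.
  split => //.
  exists [:: C; qbase h]; split; last by right; left.
  split; last by split => //.
  split; first by split; [move=> E; apply: CB | exists x, c].
  split => //; split; first exact: CB.
  by exists c, x; do 2 split => //; apply: cay_sym.
exists cA, cB; split; first exact: Hin.
split; first exact: Hin.
move=> [p [Hw [Hl Hf]]].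
have Ya : ball_minus (cay_adj S) (r + 2) 1 (fun u => u = 1 \/ u = h) a.
  have [c1 [ch _]] := Na.
  split; last by move=> [E|E]; [apply: c1 | apply: ch].
  exact: (proj1 (ball_edge_vertex (ah_edge gS Sh hh hc r2 Na))).
have [y [Hy Hc]] := qpath gS Sh hh hc Hw Hl Hf (or_introl erefl : sval cA a) Ya.
apply: Hnc.
have [_ Yy] := conn_in_ends Hc.
have Hb : sval cB b by left.
have [Ey Ny] : (y = b \/ y = b * h) /\ nbhd2 (cay_adj S) 1 h y.
  case: (coset_two hh Hb Hy) => ->; split; auto; exact: nb_h.
have Cay : conn_graph_adj (cay_adj S) (r + 2) 1 h a y.
  by split => //; split => //; left; split => //; split.
case: Ey => Ey.
- by subst; apply: rt_step.
- apply: rt_trans (rt_step _ _ _ _ Cay) _.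
  have := cg_h gS Sh hh hc r2 Ny; rewrite Ey -mulgA hh mulg1 => H.
  by apply: rt_step.
Qed.
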